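(* Let $A$ be a finite alphabet and let $f : A^* \to \mathbb{N}$ be a polyblind function. Then $f$ is $k$-repetitive for every integer $k \ge 1$.
   Context: A bimachine is a tuple $(A, M, \mu, \lambda)$ where $A$ is a finite alphabet, $M$ a finite monoid, $\mu : A^* \to M$ a monoid morphism and $\lambda : M \times A \times M \to \mathbb{N}$; it computes $f(w) = \sum_{i=1}^{|w|} \lambda(\mu(w[1{:}i-1]), w[i], \mu(w[i+1{:}|w|]))$. A function $A^* \to \mathbb{N}$ is regular if it is computed by a bimachine. The polyblind functions are the smallest class of functions $A^* \to \mathbb{N}$ containing the regular functions and closed under sum $f+g$ and Hadamard (pointwise) product $(f \cdot g)(w) = f(w) g(w)$. For $k \ge 1$, a function $f : A^* \to \mathbb{N}$ is $k$-repetitive if there exists an integer $\omega_0 \ge 1$ such that for all words $\alpha, \beta, \alpha_0, u_1, \alpha_1, \dots, u_k, \alpha_k \in A^*$ and every positive multiple $\omega$ of $\omega_0$, setting $W(Z_1,\dots,Z_k) = \alpha_0 \prod_{i=1}^k u_i^{\omega Z_i} \alpha_i$ and $w = W(1,\dots,1)$, there exists a function $F : \mathbb{N}^k \to \mathbb{N}$ such that for all integers $X_1,\dots,X_k,Y_1,\dots,Y_k \ge 3$, $f(\alpha\, w^{2\omega-1} W(X_1,\dots,X_k)\, w^{\omega-1}\, W(Y_1,\dots,Y_k)\, w^{\omega}\, \beta) = F(X_1+Y_1, \dots, X_k+Y_k)$. *)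

(* Defs.v *)
From mathcomp Require Import all_boot.
Set Implicit Arguments. Unset Strict Implicit. Unset Printing Implicit Defensive.

Section Defs.
Variable A : finType.

Definition wpow (u : seq A) (n : nat) : seq A := flatten (nseq n u).

Definition is_monoid (M : finType) (mul : M -> M -> M) (one : M) : Prop :=
  [/\ associative mul, left_id one mul & right_id one mul].

Definition is_monoid_morphism (M : finType) (mul : M -> M -> M) (one : M)
  (mu : seq A -> M) : Prop :=
  mu [::] = one /\ forall u v, mu (u ++ v) = mul (mu u) (mu v).

Definition bimachine_fun (M : finType) (mu : seq A -> M)
  (lam : M -> A -> M -> nat) (w : seq A) : nat :=
  \sum_(i < size w) lam (mu (take i w)) (tnth (in_tuple w) i) (mu (drop i.+1 w)).

Definition regular (f : seq A -> nat) : Prop :=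
  exists (M : finType) (mul : M -> M -> M) (one : M) (mu : seq A -> M)
         (lam : M -> A -> M -> nat),
    is_monoid mul one /\ is_monoid_morphism mul one mu /\
    forall w, f w = bimachine_fun mu lam w.

Inductive polyblind : (seq A -> nat) -> Prop :=
  | pb_reg f : regular f -> polyblind f
  | pb_add f g : polyblind f -> polyblind g -> polyblind (fun w => f w + g w)
  | pb_mul f g : polyblind f -> polyblind g -> polyblind (fun w => f w * g w).

(* W(Z_1..Z_k) = alpha_0 prod_{i=1}^k u_i^{omega Z_i} alpha_i,
   with u i = u_{i+1}, al i = alpha_{i+1} for i : 'I_k. *)
Definition Wword (k : nat) (om : nat) (al0 : seq A) (u al : 'I_k -> seq A)
  (Z : 'I_k -> nat) : seq A :=
  al0 ++ flatten [seq wpow (u i) (om * Z i) ++ al i | i <- enum 'I_k].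

Definition k_repetitive (k : nat) (f : seq A -> nat) : Prop :=
  exists2 om0 : nat, 1 <= om0 &
  forall (alpha beta al0 : seq A) (u al : 'I_k -> seq A) (om : nat),
    0 < om -> om0 %| om ->
    let W := Wword om al0 u al in
    let w := W (fun _ => 1) in
    exists F : {ffun 'I_k -> nat} -> nat,
      forall X Y : {ffun 'I_k -> nat},
        (forall i, 3 <= X i) -> (forall i, 3 <= Y i) ->
        f (alpha ++ wpow w (2 * om - 1) ++ W X ++ wpow w (om - 1)
              ++ W Y ++ wpow w om ++ beta)
        = F [ffun i => X i + Y i].

End Defs.

(* Main.v *)
Require Import Defs.
From mathcomp Require Import all_boot zify.
Set Implicit Arguments. Unset Strict Implicit. Unset Printing Implicit Defensive.
From Stdlib Require Import FunctionalExtensionality.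

Section Mon.
Variables (A M : finType) (mul : M -> M -> M) (one : M) (mu : seq A -> M)
  (lam : M -> A -> M -> nat).
Hypotheses (mulA : forall x y z, mul x (mul y z) = mul (mul x y) z)
  (mul1m : forall x, mul one x = x) (mulm1 : forall x, mul x one = x)
  (mu_nil : mu [::] = one) (mu_cat : forall u v, mu (u ++ v) = mul (mu u) (mu v)).

Fixpoint bfr (L R : M) (w : seq A) : nat :=
  match w with [::] => 0 | a :: w' => lam L a (mul (mu w') R) + bfr (mul L (mu [:: a])) R w' end.

Lemma bfr_cat s t L R : bfr L R (s ++ t) = bfr L (mul (mu t) R) s + bfr (mul L (mu s)) R t.
Proof.
elim: s L => [|a s IH] L /=; first by rewrite mu_nil mulm1.
rewrite IH mu_cat -mulA addnA; congr (_ + _ + bfr _ _ _).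
by rewrite -[a :: s]/([:: a] ++ s) mu_cat mulA.
Qed.

Lemma bfr_sum (x0 : A) w L R :
  \sum_(i < size w) lam (mul L (mu (take i w))) (nth x0 w i) (mul (mu (drop i.+1 w)) R)
  = bfr L R w.
Proof.
elim: w L => [|a w IH] L /=; first by rewrite big_ord0.
rewrite big_ord_recl /= mu_nil mulm1 drop0; congr (_ + _).
rewrite -IH; apply: eq_bigr => i _ /=.
by rewrite -[a :: take i w]/([:: a] ++ take i w) mu_cat mulA.
Qed.

Lemma bim_bfr w : bimachine_fun mu lam w = bfr one one w.
Proof.
case: w => [|a w]; first by rewrite /bimachine_fun big_ord0.
rewrite /bimachine_fun -(bfr_sum a); apply: eq_bigr => i _.
by rewrite (tnth_nth a) mul1m mulm1.
Qed.

Lemma bfr_insert P V Q : mul (mu P) (mu V) = mu P -> mul (mu V) (mu Q) = mu Q ->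
  bfr one one (P ++ V ++ Q) = bfr one one (P ++ Q) + bfr (mu P) (mu Q) V.
Proof.
move=> h1 h2; rewrite !bfr_cat mu_cat h2 !mul1m !mulm1 h1.
by rewrite addnAC addnA.
Qed.

Definition mpow (m : M) n := iter n (mul m) one.

Lemma mpowD m a b : mpow m (a + b) = mul (mpow m a) (mpow m b).
Proof. elim: a => [|a IH] /=; first by rewrite mul1m. by rewrite /mpow /= -/(mpow m _) IH mulA. Qed.

Lemma mpowS m n : mul m (mpow m n) = mpow m n.+1.
Proof. by []. Qed.

Lemma wpowS (u : seq A) n : wpow u n.+1 = u ++ wpow u n.
Proof. by []. Qed.

Lemma wpowD (u : seq A) a b : wpow u (a + b) = wpow u a ++ wpow u b.
Proof. elim: a => [|a IH] //=. by rewrite addSn !wpowS IH catA. Qed.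

Lemma mu_wpow u n : mu (wpow u n) = mpow (mu u) n.
Proof. elim: n => [|n IH]; first by rewrite /= mu_nil. by rewrite wpowS mu_cat IH. Qed.

Definition om0 := #|M|`!.

Lemma period m : exists a p, [/\ a <= #|M|, 0 < p <= #|M| & mpow m (a + p) = mpow m a].
Proof.
pose g := fun i : 'I_#|M|.+1 => mpow m i.
have : ~~ injectiveb g.
  apply/negP => /injectiveP /leq_card; by rewrite card_ord ltnn.
move/injectivePn => [x [y nxy eqxy]].
have hx := ltn_ord x; have hy := ltn_ord y.
case: (ltngtP x y) => hxy.
- exists x, (y - x); split; try lia. by rewrite /g in eqxy; rewrite subnKC ?eqxy // ltnW.
- exists y, (x - y); split; try lia. by rewrite /g in eqxy; rewrite subnKC ?eqxy // ltnW.
- by move: nxy; rewrite (val_inj hxy) eqxx.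
Qed.

Lemma mpow_per m om n : 0 < om -> om0 %| om -> om <= n -> mpow m (n + om) = mpow m n.
Proof.
move=> om_gt0 dom hn.
have [a [p [ha hp hap]]] := period m.
have hpom : p %| om by apply: dvdn_trans dom; apply: dvdn_fact.
have hom0 : om0 <= om by apply: dvdn_leq.
have han : a <= n by move: (fact_geq #|M|); rewrite -/om0; lia.
have [c ->] := dvdnP hpom.
elim: c => [|c IH]; first by rewrite mul0n addn0.
have -> : n + c.+1 * p = (n - a) + (a + p) + c * p by lia.
rewrite -addnA [(a + p) + _]addnC addnA mpowD (mpowD _ (n - a)) hap -mpowD -mpowD.
by rewrite -IH; congr mpow; lia.
Qed.

Lemma mpow_mulZ m om z : 0 < om -> om0 %| om -> 0 < z -> mpow m (om * z) = mpow m om.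
Proof.
move=> h1 h2; elim: z => [|z IH] // _.
case: z IH => [|z] IH; first by rewrite muln1.
by rewrite mulnS addnC mpow_per // ?IH // leq_pmulr.
Qed.

Section Words.
Variables (k om : nat) (al0 : seq A) (u al : 'I_k -> seq A) (i : 'I_k).

Definition gW (Z : 'I_k -> nat) (j : 'I_k) := wpow (u j) (om * Z j) ++ al j.
Definition idx := index i (enum 'I_k).
Definition pre Z := al0 ++ flatten (map (gW Z) (take idx (enum 'I_k))).
Definition suf Z := al i ++ flatten (map (gW Z) (drop idx.+1 (enum 'I_k))).
Definition bump (Z : 'I_k -> nat) := fun j => Z j + (j == i).

Lemma enum_split : enum 'I_k = take idx (enum 'I_k) ++ i :: drop idx.+1 (enum 'I_k).
Proof.
rewrite -{1}(cat_take_drop idx (enum 'I_k)) (drop_nth i).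
  by rewrite nth_index // mem_enum.
by rewrite /idx index_mem mem_enum.
Qed.

Lemma Wsplit Z : Wword om al0 u al Z = pre Z ++ wpow (u i) (om * Z i) ++ suf Z.
Proof.
rewrite /Wword {1}enum_split map_cat flatten_cat /= /pre /suf -!catA.
by congr (_ ++ _); rewrite -!catA.
Qed.

Lemma notin_parts : i \notin take idx (enum 'I_k) /\ i \notin drop idx.+1 (enum 'I_k).
Proof.
have := enum_uniq 'I_k; rewrite {1}enum_split cat_uniq /= => /and3P [_ h /andP [h2 _]].
split=> //; apply/negP => hi; move: h; rewrite negb_or => /andP [h _].
by rewrite hi in h.
Qed.

Lemma pre_bump Z : pre (bump Z) = pre Z.
Proof.
rewrite /pre; congr (_ ++ flatten _); apply/eq_in_map => j hj.
rewrite /gW /bump; case: eqP => [ej|]; last by rewrite addn0.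
by case: notin_parts; rewrite -ej hj.
Qed.

Lemma suf_bump Z : suf (bump Z) = suf Z.
Proof.
rewrite /suf; congr (_ ++ flatten _); apply/eq_in_map => j hj.
rewrite /gW /bump; case: eqP => [ej|]; last by rewrite addn0.
by case: notin_parts; rewrite -ej hj.
Qed.

End Words.

Definition word k om (alpha beta al0 : seq A) (u al : 'I_k -> seq A) (X Y : 'I_k -> nat) :=
  alpha ++ wpow (Wword om al0 u al (fun _ => 1)) (2 * om - 1) ++ Wword om al0 u al X
  ++ wpow (Wword om al0 u al (fun _ => 1)) (om - 1) ++ Wword om al0 u al Y
  ++ wpow (Wword om al0 u al (fun _ => 1)) om ++ beta.

Section MuW.
Variables (k om : nat) (al0 : seq A) (u al : 'I_k -> seq A).
Hypotheses (om_gt0 : 0 < om) (dom : om0 %| om).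

Lemma mu_flat t Z : (forall j, 0 < Z j) ->
  mu (flatten (map (gW om u al Z) t)) = mu (flatten (map (gW om u al (fun _ => 1)) t)).
Proof.
move=> hZ; elim: t => [|j t IH] //. by rewrite /= !mu_cat IH /gW !mu_wpow muln1 mpow_mulZ.

Qed.

Lemma mu_W Z : (forall j, 0 < Z j) -> mu (Wword om al0 u al Z) = mu (Wword om al0 u al (fun _ => 1)).
Proof. by move=> hZ; rewrite /Wword !mu_cat (mu_flat (enum 'I_k) hZ). Qed.

Lemma mu_pre i Z : (forall j, 0 < Z j) -> mu (pre om al0 u al i Z) = mu (pre om al0 u al i (fun _ => 1)).
Proof. by move=> hZ; rewrite /pre !mu_cat mu_flat. Qed.

Lemma mu_suf i Z : (forall j, 0 < Z j) -> mu (suf om u al i Z) = mu (suf om u al i (fun _ => 1)).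
Proof. by move=> hZ; rewrite /suf !mu_cat mu_flat. Qed.

Lemma ee m : mul (mpow m om) (mpow m om) = mpow m om.
Proof. by rewrite -mpowD mpow_per. Qed.

Lemma reg_step (alpha beta : seq A) (X Y : 'I_k -> nat) i :
  (forall j, 3 <= X j) -> (forall j, 3 <= Y j) ->
  bfr one one (word om alpha beta al0 u al (bump i X) Y)
  = bfr one one (word om alpha beta al0 u al X (bump i Y)).
Proof.
move=> hX hY.
have hX0 : forall j, 0 < X j by move=> j; apply: leq_trans (hX j).
have hY0 : forall j, 0 < Y j by move=> j; apply: leq_trans (hY j).
rewrite /word.
set w := Wword om al0 u al (fun _ => 1).
set ui := u i.
have eB : forall Z, 3 <= Z i -> wpow ui (om * bump i Z i) = wpow ui om ++ wpow ui om ++ wpow ui (om * (Z i - 1)).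
  move=> Z hZ; rewrite /bump eqxx -!wpowD; congr wpow.
  have -> : Z i + true = (Z i - 1).+2 by rewrite /=; lia.
  by rewrite !mulnS.
have eN : forall Z, 3 <= Z i -> wpow ui (om * Z i) = wpow ui om ++ wpow ui (om * (Z i - 1)).
  move=> Z hZ; rewrite -!wpowD; congr wpow; rewrite -mulnS; congr (_ * _); lia.
set P := alpha ++ wpow w (2 * om - 1) ++ pre om al0 u al i X ++ wpow ui om.
set V := wpow ui om.
set Q := wpow ui (om * (X i - 1)) ++ suf om u al i X ++ wpow w (om - 1)
   ++ Wword om al0 u al Y ++ wpow w om ++ beta.
set P' := alpha ++ wpow w (2 * om - 1) ++ Wword om al0 u al X ++ wpow w (om - 1)
   ++ pre om al0 u al i Y ++ wpow ui om.
set Q' := wpow ui (om * (Y i - 1)) ++ suf om u al i Y ++ wpow w om ++ beta.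
have E1 : alpha ++ wpow w (2 * om - 1) ++ Wword om al0 u al (bump i X) ++ wpow w (om - 1)
   ++ Wword om al0 u al Y ++ wpow w om ++ beta = P ++ V ++ Q.
  by rewrite (Wsplit _ _ _ _ i) pre_bump suf_bump eB // /P /V /Q !catA.
have E2 : alpha ++ wpow w (2 * om - 1) ++ Wword om al0 u al X ++ wpow w (om - 1)
   ++ Wword om al0 u al Y ++ wpow w om ++ beta = P ++ Q.
  by rewrite (Wsplit _ _ _ _ i) eN // /P /V /Q !catA.
have E3 : alpha ++ wpow w (2 * om - 1) ++ Wword om al0 u al X ++ wpow w (om - 1)
   ++ Wword om al0 u al (bump i Y) ++ wpow w om ++ beta = P' ++ V ++ Q'.
  by rewrite [Wword _ _ _ _ (bump i Y)](Wsplit _ _ _ _ i) pre_bump suf_bump eB // /P' /V /Q' !catA.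
have E4 : alpha ++ wpow w (2 * om - 1) ++ Wword om al0 u al X ++ wpow w (om - 1)
   ++ Wword om al0 u al Y ++ wpow w om ++ beta = P' ++ Q'.
  rewrite [Wword om al0 u al Y](Wsplit _ _ _ _ i) eN // /P' /V /Q' !catA.
  by [].
set mm := mu w.
set e := mpow (mu ui) om.
have eX : mpow (mu ui) (om * (X i - 1)) = e by rewrite mpow_mulZ // subn_gt0; apply: leq_trans (hX i).
have eY : mpow (mu ui) (om * (Y i - 1)) = e by rewrite mpow_mulZ // subn_gt0; apply: leq_trans (hY i).
have muV : mu V = e by rewrite mu_wpow.
have muP : mu P = mu P'.
  rewrite /P /P'; move: (mu_W hX0) (mu_pre i hX0) (mu_pre i hY0).
  rewrite -/w -/mm.
  generalize (Wword om al0 u al X) (pre om al0 u al i X) (pre om al0 u al i Y)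
    (pre om al0 u al i (fun _ => 1)) => WX pX pY p1 hW hpX hpY.
  rewrite !mu_cat hW hpX hpY; congr (mul _ _).
  rewrite !mu_wpow -/mm; symmetry; rewrite [mul mm _]mulA mpowS mulA -mpowD.
  have -> : 2 * om - 1 + (om - 1).+1 = (2 * om - 1) + om by lia.
  by rewrite mpow_per //; lia.
have muQ : mu Q = mu Q'.
  rewrite /Q /Q'; move: (mu_W hY0) (mu_suf i hX0) (mu_suf i hY0).
  rewrite -/w -/mm.
  generalize (Wword om al0 u al Y) (suf om u al i X) (suf om u al i Y)
    (suf om u al i (fun _ => 1)) => WY sX sY s1 hW hsX hsY.
  rewrite !mu_cat hW hsX hsY !mu_wpow eX eY -/mm.
  congr (mul _ (mul _ _)).
  rewrite [mul mm _]mulA mpowS mulA -mpowD.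
  have -> : om - 1 + om.+1 = om + om by lia.
  by rewrite mpow_per.
have h1 : mul (mu P) (mu V) = mu P.
  rewrite muV /P; generalize (pre om al0 u al i X) => pX.
  by rewrite !mu_cat -!mulA !mu_wpow ee.
have h2 : mul (mu V) (mu Q) = mu Q.
  rewrite muV /Q; generalize (suf om u al i X) (Wword om al0 u al Y) => sX WY.
  by rewrite !mu_cat !mu_wpow eX mulA ee.
have h1' : mul (mu P') (mu V) = mu P'.
  by rewrite -muP.
have h2' : mul (mu V) (mu Q') = mu Q'.
  by rewrite -muQ.
rewrite E1 E3 (bfr_insert h1 h2) (bfr_insert h1' h2') -E2 -E4 muP muQ.
by [].
Qed.

End MuW.
End Mon.

Definition Good (A : finType) (f : seq A -> nat) :=
  exists2 o, 0 < o & forall k om alpha beta al0 (u al : 'I_k -> seq A) (X Y : 'I_k -> nat) i,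
    0 < om -> o %| om -> (forall j, 3 <= X j) -> (forall j, 3 <= Y j) ->
    f (word om alpha beta al0 u al (bump i X) Y) = f (word om alpha beta al0 u al X (bump i Y)).

Lemma regular_good (A : finType) (f : seq A -> nat) : regular f -> Good f.
Proof.
case=> M [mul [one [mu [lam [[hA hl hr] [[h0 hc] hf]]]]]].
exists (om0 M); first exact: fact_gt0.
move=> k om alpha beta al0 u al X Y i hom hd hX hY.
rewrite !hf !(bim_bfr lam hA hl hr h0 hc).
exact: reg_step.
Qed.

Lemma good_add (A : finType) (f g : seq A -> nat) : Good f -> Good g -> Good (fun w => f w + g w).
Proof.
move=> [o1 h1 Hf] [o2 h2 Hg]; exists (o1 * o2); first by rewrite muln_gt0 h1.
move=> k om alpha beta al0 u al X Y i hom hd hX hY.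
rewrite Hf ?Hg //; [apply: dvdn_trans hd; exact: dvdn_mull|apply: dvdn_trans hd; exact: dvdn_mulr].
Qed.

Lemma good_mul (A : finType) (f g : seq A -> nat) : Good f -> Good g -> Good (fun w => f w * g w).
Proof.
move=> [o1 h1 Hf] [o2 h2 Hg]; exists (o1 * o2); first by rewrite muln_gt0 h1.
move=> k om alpha beta al0 u al X Y i hom hd hX hY.
rewrite Hf ?Hg //; [apply: dvdn_trans hd; exact: dvdn_mull|apply: dvdn_trans hd; exact: dvdn_mulr].
Qed.

Lemma polyblind_good (A : finType) (f : seq A -> nat) : polyblind f -> Good f.
Proof.
elim=> [h|f1 g1 _ h1 _ h2|f1 g1 _ h1 _ h2]; [exact: regular_good|exact: good_add|exact: good_mul].
Qed.

Lemma good_rep (A : finType) (f : seq A -> nat) k : Good f -> k_repetitive k f.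
Proof.
move=> [o ho Hf]; exists o => // alpha beta al0 u al om hom hd W w.
pose g (X Y : 'I_k -> nat) := f (word om alpha beta al0 u al X Y).
have base : forall (X Y : 'I_k -> nat), (forall j, 3 <= X j) -> (forall j, ~~ (3 < X j)) ->
    g X Y = g (fun _ => 3) (fun j => X j + Y j - 3).
  move=> X Y hX hno.
  have eX : forall l, X l = 3 by move=> l; have := hX l; have := hno l; lia.
  have -> : (fun j => X j + Y j - 3) = Y.
    by apply: functional_extensionality => l; rewrite eX; lia.
  have -> // : X = (fun _ => 3) by apply: functional_extensionality.
have key : forall n (X Y : 'I_k -> nat), \sum_j X j = n -> (forall j, 3 <= X j) ->
    (forall j, 3 <= Y j) -> g X Y = g (fun _ => 3) (fun j => X j + Y j - 3).
  elim=> [|n IH] X Y hs hX hY; case: (pickP (fun j => 3 < X j)) => [j hj | hno];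
    try (by apply: base => // l; rewrite hno).
  - by move: hs; rewrite (bigD1 j) //=; lia.
  pose X' := fun l => X l - (l == j).
  have eX : X = bump j X'.
    apply: functional_extensionality => l; rewrite /bump /X'.
    by case: eqP => [->|] /=; lia.
  have hX' : forall l, 3 <= X' l.
    move=> l; rewrite /X'; case: eqP => [->|] /=; last by rewrite subn0.
    by move: hj => /=; lia.
  have hs' : \sum_l X' l = n.
    move: hs; rewrite {1}eX /bump big_split /=.
    rewrite [X in _ + X = _](bigD1 j) //= eqxx [X in _ + (_ + X) = _]big1; last by move=> l hl; rewrite (negbTE hl).
    lia.
  have step : g X Y = g X' (bump j Y) by rewrite /g {1}eX Hf.
  have hYb : forall l, 3 <= bump j Y l by move=> l; rewrite /bump; apply: leq_trans (hY l) (leq_addr _ _).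
  rewrite step (IH X' (bump j Y) hs' hX' hYb).
  congr g; apply: functional_extensionality => l; rewrite eX /bump; lia.
exists (fun S : {ffun 'I_k -> nat} => g (fun _ => 3) (fun j => S j - 3)).
move=> X Y hX hY.
change (g X Y = g (fun _ => 3) (fun j => [ffun i => X i + Y i] j - 3)). rewrite (key _ X Y erefl) //.
congr g; apply: functional_extensionality => l; by rewrite ffunE.
Qed.

Theorem mainTheorem1 (A : finType) (f : seq A -> nat) :
  polyblind f -> forall k : nat, 1 <= k -> k_repetitive k f.
Proof. by move=> hf k _; apply: good_rep; apply: polyblind_good. Qed.
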